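(* For every positive integer $k$: (1) $\lim_{x\to\infty}F^k(x)=k^2-1$; (2) if $k\geq 2$, then $F^k$ is concave down on the interval $(2(k-1),\infty)$; (3) if $k\geq 3$, then $F^k(2(k-1))=F^{k-2}(2(k-1))$.
   Context: For a positive integer $k$, define $F^k:(0,\infty)\to\mathbb{R}$ by $F^k(x)=\delta_0^k(x)-k(x-k)-1$, where $\delta_0^k(x)=2x\sum_{j=1}^{k/2}\cos\left(\frac{(k-(2j-1))\pi}{x}\right)$ if $k$ is even, and $\delta_0^k(x)=x+2x\sum_{j=1}^{(k-1)/2}\cos\left(\frac{(k-(2j-1))\pi}{x}\right)$ if $k$ is odd (an empty sum is $0$). *)

(* Defs.v *)
From Stdlib Require Import Reals Lra Lia.
From Coquelicot Require Import Coquelicot.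
Open Scope R_scope.

Fixpoint sum_1_to (n : nat) (f : nat -> R) : R :=
  match n with
  | O => 0
  | S n' => sum_1_to n' f + f n
  end.

Definition cos_term (k : nat) (x : R) (j : nat) : R :=
  cos ((INR k - (2 * INR j - 1)) * PI / x).

Definition delta0 (k : nat) (x : R) : R :=
  if Nat.even k
  then 2 * x * sum_1_to (k / 2) (cos_term k x)
  else x + 2 * x * sum_1_to ((k - 1) / 2) (cos_term k x).

Definition F (k : nat) (x : R) : R :=
  delta0 k x - INR k * (x - INR k) - 1.

Definition concave_on (I : R -> Prop) (f : R -> R) : Prop :=
  forall x y t, I x -> I y -> 0 <= t <= 1 ->
    t * f x + (1 - t) * f y <= f (t * x + (1 - t) * y).

(* Main.v *)
Require Import Defs.
From Stdlib Require Import Reals Lra Lia.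
From Coquelicot Require Import Coquelicot.
Open Scope R_scope.

Lemma mvt_ord (m : R) f df a b : (forall x, m < x -> is_derive f x (df x)) ->
  m < a -> a <= b -> exists c, a <= c <= b /\ f b - f a = df c * (b - a).
Proof.
  intros Hd Ha Hab.
  destruct (MVT_gen f a b df) as [c [Hc Hc2]].
  - intros x Hx. apply Hd. unfold Rmin in Hx. destruct (Rle_dec a b); lra.
  - intros x Hx. apply continuity_pt_filterlim. apply (ex_derive_continuous (K:=R_AbsRing) (V:=R_NormedModule)).
    exists (df x). apply Hd. unfold Rmin in Hx. destruct (Rle_dec a b); lra.
  - exists c. unfold Rmin, Rmax in Hc. destruct (Rle_dec a b); [|lra]. split; lra.
Qed.

Lemma concave_deriv (m : R) f df :
  (forall x, m < x -> is_derive f x (df x)) ->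
  (forall a b, m < a -> a <= b -> df b <= df a) ->
  concave_on (fun x => m < x) f.
Proof.
  intros Hd Hmono x y t Hx Hy Ht.
  assert (Hgen : forall u v s, m < u -> u <= v -> 0 <= s <= 1 ->
     s * f u + (1 - s) * f v <= f (s * u + (1 - s) * v)).
  { clear x y t Hx Hy Ht. intros u v s Hu Huv Hs.
    set (w := s * u + (1 - s) * v).
    assert (Hw1 : u <= w) by (unfold w; nra).
    assert (Hw2 : w <= v) by (unfold w; nra).
    destruct (mvt_ord m f df u w Hd Hu Hw1) as [c1 [Hc1 E1]].
    destruct (mvt_ord m f df w v Hd ltac:(lra) Hw2) as [c2 [Hc2 E2]].
    assert (Hdd : df c2 <= df c1) by (apply Hmono; lra).
    assert (Ew1 : w - u = (1 - s) * (v - u)) by (unfold w; ring).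
    assert (Ew2 : v - w = s * (v - u)) by (unfold w; ring).
    rewrite Ew1 in E1. rewrite Ew2 in E2.
    assert (0 <= s * (1 - s) * (v - u)) by (apply Rmult_le_pos; nra).
    assert (s * f u + (1 - s) * f v - f w = s * (1 - s) * (v - u) * (df c2 - df c1)).
    { replace (s * f u + (1 - s) * f v - f w) with (- s * (f w - f u) + (1 - s) * (f v - f w)) by ring.
      rewrite E1, E2. ring. }
    nra. }
  destruct (Rle_dec x y).
  - apply Hgen; lra.
  - replace (t * x + (1 - t) * y) with ((1 - t) * y + (1 - (1 - t)) * x) by ring.
    replace (t * f x + (1 - t) * f y) with ((1 - t) * f y + (1 - (1 - t)) * f x) by ring.
    apply Hgen; lra.
Qed.

Lemma term_concave (m c : R) : 0 <= m -> 0 <= c -> 2 * c <= m * PI ->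
  concave_on (fun x => m < x) (fun x => x * cos (c / x)).
Proof.
  intros Hm Hc Hcm.
  apply concave_deriv with (df := fun x => cos (c / x) + c / x * sin (c / x)).
  - intros x Hx. auto_derive.
    + lra.
    + unfold Rdiv. field. lra.
  - intros a b Ha Hab.
    destruct (mvt_ord m (fun x => cos (c / x) + c / x * sin (c / x))
       (fun x => - (c * c / (x * x * x)) * cos (c / x)) a b) as [d [Hd E]]; try lra.
    + intros x Hx. auto_derive.
      * lra.
      * unfold Rdiv. field. lra.
    + assert (0 <= c / d) by (apply Rdiv_le_0_compat; lra).
      assert (c / d < PI / 2).
      { apply Rmult_lt_reg_r with (2 * d). lra.
        replace (c / d * (2 * d)) with (2 * c) by (field; lra).
        replace (PI / 2 * (2 * d)) with (PI * d) by field.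
        assert (0 < PI) by apply PI_RGT_0. nra. }
      assert (0 < cos (c / d)) by (apply cos_gt_0; lra).
      assert (0 <= c * c / (d * d * d)).
      { apply Rdiv_le_0_compat. nra. assert (0 < d * d) by nra. nra. }
      assert (0 <= c * c / (d * d * d) * cos (c / d) * (b - a)).
      { apply Rmult_le_pos; try lra. apply Rmult_le_pos; lra. }
      simpl in E. lra.
Qed.

Lemma concave_ext I f g : (forall x, f x = g x) -> concave_on I f -> concave_on I g.
Proof. intros E H x y t Hx Hy Ht. rewrite <- !E. apply H; auto. Qed.

Lemma concave_plus I f g : concave_on I f -> concave_on I g ->
  concave_on I (fun x => f x + g x).
Proof. intros Hf Hg x y t Hx Hy Ht. pose proof (Hf x y t Hx Hy Ht). pose proof (Hg x y t Hx Hy Ht). lra. Qed.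

Lemma concave_scal I a f : 0 <= a -> concave_on I f -> concave_on I (fun x => a * f x).
Proof. intros Ha Hf x y t Hx Hy Ht. pose proof (Hf x y t Hx Hy Ht).
  replace (t * (a * f x) + (1 - t) * (a * f y)) with (a * (t * f x + (1 - t) * f y)) by ring.
  apply Rmult_le_compat_l; auto. Qed.

Lemma concave_lin I a b : concave_on I (fun x => a * x + b).
Proof. intros x y t Hx Hy Ht. right. ring. Qed.

Lemma concave_sum I n (g : nat -> R -> R) :
  (forall j, (1 <= j <= n)%nat -> concave_on I (g j)) ->
  concave_on I (fun x => sum_1_to n (fun j => g j x)).
Proof.
  induction n; intros H; simpl.
  - apply concave_ext with (fun x => 0 * x + 0). intros; ring. apply concave_lin.
  - apply concave_plus. apply IHn. intros; apply H; lia. apply H; lia.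
Qed.

Lemma sum_mul x n f : x * sum_1_to n f = sum_1_to n (fun j => x * f j).
Proof. induction n; simpl. ring. rewrite <- IHn. ring. Qed.

Lemma sum_shift n f : sum_1_to (S n) f = f 1%nat + sum_1_to n (fun j => f (S j)).
Proof. induction n. simpl. ring. change (sum_1_to (S (S n)) f) with (sum_1_to (S n) f + f (S (S n))).
  rewrite IHn. simpl. ring. Qed.

Lemma sum_ext n f g : (forall j, (1 <= j <= n)%nat -> f j = g j) -> sum_1_to n f = sum_1_to n g.
Proof. induction n; intros H; simpl. auto. rewrite IHn, H. auto. lia. intros; apply H; lia. Qed.

Lemma sum_minus x n f : sum_1_to n (fun j => x * (f j - 1)) = x * sum_1_to n f - INR n * x.
Proof. induction n; simpl sum_1_to. simpl. ring. rewrite IHn, S_INR. ring. Qed.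

Lemma parity k : (exists p, k = (2 * p)%nat /\ forall x : R, delta0 k x = 2 * x * sum_1_to p (Defs.cos_term k x))
  \/ (exists p, k = (2 * p + 1)%nat /\ forall x : R, delta0 k x = x + 2 * x * sum_1_to p (Defs.cos_term k x)).
Proof.
  destruct (Nat.Even_or_Odd k) as [[p Hp]|[p Hp]].
  - left. exists p. split; auto. intros x. unfold delta0.
    assert (Nat.even k = true) by (subst; rewrite Nat.even_mul; reflexivity).
    rewrite H. replace (k / 2)%nat with p. auto. subst. rewrite Nat.mul_comm, Nat.div_mul; lia.
  - right. exists p. split; auto. intros x. unfold delta0.
    assert (Nat.even k = false) by (subst; rewrite Nat.even_add, Nat.even_mul; reflexivity).
    rewrite H. replace ((k - 1) / 2)%nat with p. auto. subst.
    replace (2 * p + 1 - 1)%nat with (p * 2)%nat by lia. rewrite Nat.div_mul; lia.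
Qed.

Lemma sin_sq_le v : sin v * sin v <= v * v.
Proof.
  assert (H : forall v, 0 <= v -> sin v * sin v <= v * v).
  { clear v. intros v Hv.
    assert (sin v <= v).
    { destruct (Req_dec v 0). subst. rewrite sin_0. lra. left. apply sin_lt_x. lra. }
    assert (- v <= sin v).
    { destruct (Rle_dec 1 v). pose proof (SIN_bound v). lra.
      assert (0 <= sin v). apply sin_ge_0. lra. pose proof PI2_1. lra. lra. }
    nra. }
  destruct (Rle_dec 0 v). auto. replace v with (- - v) by ring. rewrite sin_neg.
  specialize (H (- v)). nra.
Qed.

Lemma term_lim c : is_lim (fun x => x * (cos (c / x) - 1)) p_infty 0.
Proof.
  apply is_lim_le_le_loc with (f := fun x => - (c * c / 2) * / x) (g := fun _ => 0).
  - exists 0. intros x Hx.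
    assert (E : cos (c / x) = 1 - 2 * sin (c / x / 2) * sin (c / x / 2)).
    { rewrite <- cos_2a_sin. f_equal. field. lra. }
    pose proof (sin_sq_le (c / x / 2)).
    assert (Hs : 0 <= sin (c / x / 2) * sin (c / x / 2)) by nra.
    rewrite E. split.
    + replace (x * (1 - 2 * sin (c / x / 2) * sin (c / x / 2) - 1)) with
        (- (2 * x) * (sin (c / x / 2) * sin (c / x / 2))) by ring.
      replace (- (c * c / 2) * / x) with (- (2 * x) * (c / x / 2 * (c / x / 2))) by (field; lra).
      apply Ropp_le_contravar in H. nra.
    + nra.
  - replace (Finite 0) with (Rbar_mult (- (c * c / 2)) (Rbar_inv p_infty)) by (simpl; f_equal; ring).
    apply is_lim_scal_l. apply is_lim_inv. apply is_lim_id. discriminate.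
  - apply is_lim_const.
Qed.

Lemma sum_lim n (g : nat -> R -> R) : (forall j, is_lim (g j) p_infty 0) ->
  is_lim (fun x => sum_1_to n (fun j => g j x)) p_infty 0.
Proof.
  intros H. induction n; simpl.
  - apply is_lim_const.
  - replace (Finite 0) with (Finite (0 + 0)) by (f_equal; ring). apply is_lim_plus'; auto.
Qed.

Lemma ct_shift k x j : (2 <= k)%nat ->
  Defs.cos_term k x (S j) = Defs.cos_term (k - 2) x j.
Proof. intros Hk. unfold Defs.cos_term. rewrite minus_INR by lia. rewrite S_INR.
  replace (INR 2) with 2 by (simpl; ring).
  replace (INR k - (2 * (INR j + 1) - 1)) with (INR k - 2 - (2 * INR j - 1)) by ring.
  reflexivity. Qed.

Lemma delta_step k x : (2 <= k)%nat ->
  delta0 k x = delta0 (k - 2) x + 2 * x * Defs.cos_term k x 1.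
Proof.
  intros Hk.
  destruct (parity k) as [[p [Hp Hd]]|[p [Hp Hd]]];
  destruct (parity (k - 2)) as [[p' [Hp' Hd']]|[p' [Hp' Hd']]]; try lia.
  - rewrite Hd, Hd'. destruct p as [|q]. lia. replace p' with q by lia.
    rewrite sum_shift. rewrite (sum_ext q _ (Defs.cos_term (k - 2) x)).
    ring. intros; apply ct_shift; auto.
  - rewrite Hd, Hd'. destruct p as [|q]. lia. replace p' with q by lia.
    rewrite sum_shift. rewrite (sum_ext q _ (Defs.cos_term (k - 2) x)).
    ring. intros; apply ct_shift; auto.
Qed.

Lemma INR2p p : INR (2 * p) = 2 * INR p.
Proof. rewrite mult_INR. simpl. ring. Qed.
Lemma INR2p1 p : INR (2 * p + 1) = 2 * INR p + 1.
Proof. rewrite plus_INR, mult_INR. simpl. ring. Qed.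

Theorem lemma3p3 (k : nat) (hk : (1 <= k)%nat) :
  is_lim (F k) p_infty (INR k ^ 2 - 1)
  /\ ((2 <= k)%nat ->
        concave_on (fun x => 2 * (INR k - 1) < x) (F k))
  /\ ((3 <= k)%nat ->
        F k (2 * (INR k - 1)) = F (k - 2) (2 * (INR k - 1))).
Proof.
  split; [|split].
  - assert (HS : forall p, is_lim (fun x => 2 * sum_1_to p (fun j => x * (Defs.cos_term k x j - 1))) p_infty 0).
    { intros p. replace (Finite 0) with (Rbar_mult 2 0) by (simpl; f_equal; ring).
      apply is_lim_scal_l. apply sum_lim. intros j. unfold Defs.cos_term. apply term_lim. }
    destruct (parity k) as [[p [Hp Hd]]|[p [Hp Hd]]].
    + eapply is_lim_ext.
      2:{ replace (INR k ^ 2 - 1) with (0 + (INR k ^ 2 - 1)) by ring.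
          apply is_lim_plus'. apply (HS p). apply is_lim_const. }
      intros x. simpl. unfold F. rewrite Hd, sum_minus. rewrite Hp, INR2p. ring.
    + eapply is_lim_ext.
      2:{ replace (INR k ^ 2 - 1) with (0 + (INR k ^ 2 - 1)) by ring.
          apply is_lim_plus'. apply (HS p). apply is_lim_const. }
      intros x. simpl. unfold F. rewrite Hd, sum_minus. rewrite Hp, INR2p1. ring.
  - intros Hk2.
    assert (Hk2R : 2 <= INR k) by (replace 2 with (INR 2) by (simpl; ring); apply le_INR; lia).
    assert (HPI : 0 < PI) by apply PI_RGT_0.
    assert (HT : forall p, (2 * p <= k)%nat -> concave_on (fun x => 2 * (INR k - 1) < x)
               (fun x => 2 * sum_1_to p (fun j => x * Defs.cos_term k x j))).
    { intros p Hpk. apply concave_scal. lra. apply concave_sum. intros j Hj.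
      unfold Defs.cos_term. apply term_concave. lra.
      - assert (2 * INR j <= INR k). { rewrite <- INR2p. apply le_INR. lia. }
        apply Rmult_le_pos; lra.
      - assert (1 <= INR j) by (replace 1 with (INR 1) by reflexivity; apply le_INR; lia).
        nra. }
    destruct (parity k) as [[p [Hp Hd]]|[p [Hp Hd]]].
    + apply concave_ext with (fun x => 2 * sum_1_to p (fun j => x * Defs.cos_term k x j)
          + ((- INR k) * x + (INR k * INR k - 1))).
      { intros x. unfold F. rewrite Hd, <- sum_mul. ring. }
      apply concave_plus. apply HT. lia. apply concave_lin.
    + apply concave_ext with (fun x => 2 * sum_1_to p (fun j => x * Defs.cos_term k x j)
          + ((1 - INR k) * x + (INR k * INR k - 1))).
      { intros x. unfold F. rewrite Hd, <- sum_mul. ring. }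
      apply concave_plus. apply HT. lia. apply concave_lin.
  - intros Hk3. unfold F. rewrite (delta_step k) by lia.
    assert (Hk3R : 3 <= INR k) by (replace 3 with (INR 3) by (simpl; ring); apply le_INR; lia).
    assert (Hc : Defs.cos_term k (2 * (INR k - 1)) 1 = 0).
    { unfold Defs.cos_term. rewrite <- cos_PI2. f_equal. simpl INR. field. lra. }
    rewrite Hc, minus_INR by lia. simpl INR. ring.
Qed.
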